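(* For real numbers $t_1,t_2,t_3$, let $$\rho_{AB}=\tfrac18\,\mathbb{1}_2\otimes\mathbb{1}_4+\tfrac14\big(t_1\,\sigma_1\otimes\lambda_1+t_2\,\sigma_2\otimes\lambda_{13}+t_3\,\sigma_3\otimes\lambda_3\big).$$ Suppose there exist nonzero real numbers $\alpha_1,\alpha_2,\alpha_3$ with $$\alpha_1^2+\alpha_2^2+\alpha_3^2\le1,\qquad \frac{t_1^2}{\alpha_1^2}+\frac{t_3^2}{\alpha_3^2}\le\frac14,\qquad \frac{t_2^2}{\alpha_2^2}\le\frac14 .$$ Then $\rho_{AB}$ is a separable state. Explicitly, put $\beta_\mu=t_\mu/\alpha_\mu$ and define four sign patterns $$\vec\epsilon^{(1)}=(1,-1,-1),\quad \vec\epsilon^{(2)}=(-1,-1,1),\quad \vec\epsilon^{(3)}=(-1,1,-1),\quad \vec\epsilon^{(4)}=(1,1,1).$$ Then $\rho_{AB}=\sum_{i=1}^4\frac14\,\rho_i^{(A)}\otimes\rho_i^{(B)}$, where $$\rho_i^{(A)}=\tfrac12\mathbb{1}+\tfrac12\big(\epsilon^{(i)}_1\alpha_1\sigma_1+\epsilon^{(i)}_2\alpha_2\sigma_2+\epsilon^{(i)}_3\alpha_3\sigma_3\big),$$ $$\rho_i^{(B)}=\tfrac14\mathbb{1}+\tfrac12\big(\epsilon^{(i)}_1\beta_1\lambda_1+\epsilon^{(i)}_2\beta_2\lambda_{13}+\epsilon^{(i)}_3\beta_3\lambda_3\big),$$ and all of these are density matrices.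
   Context: $\sigma_1,\sigma_2,\sigma_3$ are the Pauli matrices. With $\{|1\rangle,|2\rangle,|3\rangle,|4\rangle\}$ the standard basis of $\mathbb{C}^4$, the SU(4) generalized Gell-Mann matrices used here are: - $\lambda_1=|1\rangle\langle2|+|2\rangle\langle1|$, - $\lambda_3=|1\rangle\langle1|-|2\rangle\langle2|$, - $\lambda_{13}=|3\rangle\langle4|+|4\rangle\langle3|$. A state is separable if it is a convex combination of tensor products of density matrices. *)

(* Defs.v *)
(* Complex scalars: an arbitrary numClosedFieldType C
   (e.g. the complex numbers); "real numbers" are elements of C that are
   \is Num.real. *)
From HB Require Import structures.
From mathcomp Require Import all_boot all_order all_algebra.
Set Implicit Arguments. Unset Strict Implicit. Unset Printing Implicit Defensive.
Import Order.TTheory GRing.Theory Num.Theory.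
Local Open Scope ring_scope.

Section Defs.
Variable C : numClosedFieldType.

Lemma kron_divP (m p : nat) (i : 'I_(m * p)) : (i %/ p < m)%N.
Proof.
case: p i => [|p] i; first by case: i; rewrite muln0.
by rewrite ltn_divLR // ltn_ord.
Qed.

Lemma kron_modP (m p : nat) (i : 'I_(m * p)) : (i %% p < p)%N.
Proof.
case: p i => [|p] i; first by case: i; rewrite muln0.
by rewrite ltn_mod.
Qed.

(* Kronecker product: (A (x) B)_{(i1 p + i2),(j1 q + j2)} = A_{i1 j1} B_{i2 j2} *)
Definition kron (m n p q : nat) (A : 'M[C]_(m, n)) (B : 'M[C]_(p, q))
  : 'M[C]_(m * p, n * q) :=
  \matrix_(i, j) (A (Ordinal (kron_divP i)) (Ordinal (kron_divP j)) *
                  B (Ordinal (kron_modP i)) (Ordinal (kron_modP j))).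

Definition adjmx (m n : nat) (A : 'M[C]_(m, n)) : 'M[C]_(n, m) :=
  (map_mx (@Num.conj C) A)^T.

Definition hermitian (n : nat) (A : 'M[C]_n) : Prop := adjmx A = A.

Definition psd (n : nat) (A : 'M[C]_n) : Prop :=
  forall v : 'cV[C]_n, 0 <= (adjmx v *m A *m v) ord0 ord0.

Definition density (n : nat) (A : 'M[C]_n) : Prop :=
  [/\ hermitian A, psd A & \tr A = 1].

Definition separable (m p : nat) (rho : 'M[C]_(m * p)) : Prop :=
  exists (k : nat) (w : 'I_k -> C) (RA : 'I_k -> 'M[C]_m) (RB : 'I_k -> 'M[C]_p),
    [/\ forall i, 0 <= w i,
        \sum_i w i = 1,
        forall i, density (RA i) /\ density (RB i)
      & rho = \sum_i w i *: kron (RA i) (RB i)].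

Definition sigma1 : 'M[C]_2 :=
  \matrix_(i, j) (if (i : nat) != j then 1 else 0).
Definition sigma2 : 'M[C]_2 :=
  \matrix_(i, j) (if ((i : nat) == 0) && ((j : nat) == 1) then - 'i
                  else if ((i : nat) == 1) && ((j : nat) == 0) then 'i else 0).
Definition sigma3 : 'M[C]_2 :=
  \matrix_(i, j) (if (i : nat) == j then (if (i : nat) == 0 then 1 else -1) else 0).

(* Gell-Mann matrices of SU(4); basis |1>,..,|4> = indices 0..3 *)
Definition lambda1 : 'M[C]_4 :=
  \matrix_(i, j) (if (((i : nat) == 0) && ((j : nat) == 1)) ||
                     (((i : nat) == 1) && ((j : nat) == 0)) then 1 else 0).
Definition lambda3 : 'M[C]_4 :=
  \matrix_(i, j) (if ((i : nat) == 0) && ((j : nat) == 0) then 1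
                  else if ((i : nat) == 1) && ((j : nat) == 1) then -1 else 0).
Definition lambda13 : 'M[C]_4 :=
  \matrix_(i, j) (if (((i : nat) == 2) && ((j : nat) == 3)) ||
                     (((i : nat) == 3) && ((j : nat) == 2)) then 1 else 0).

Definition rhoAB (t1 t2 t3 : C) : 'M[C]_(2 * 4) :=
  (1 / 8) *: kron (1%:M : 'M[C]_2) (1%:M : 'M[C]_4)
  + (1 / 4) *: (t1 *: kron sigma1 lambda1 + t2 *: kron sigma2 lambda13
                + t3 *: kron sigma3 lambda3).

(* sign patterns epsilon^(i), i = 1..4 (indexed 0..3), components mu = 1..3 *)
Definition eps (i : 'I_4) : C * C * C :=
  match val i with
  | 0 => (1, -1, -1)
  | 1 => (-1, -1, 1)
  | 2 => (-1, 1, -1)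
  | _ => (1, 1, 1)
  end.

Definition rhoA (a1 a2 a3 : C) (i : 'I_4) : 'M[C]_2 :=
  let: (e1, e2, e3) := eps i in
  (1 / 2) *: 1%:M + ((1 / 2) * (e1 * a1)) *: sigma1
  + ((1 / 2) * (e2 * a2)) *: sigma2 + ((1 / 2) * (e3 * a3)) *: sigma3.

Definition rhoB (b1 b2 b3 : C) (i : 'I_4) : 'M[C]_4 :=
  let: (e1, e2, e3) := eps i in
  (1 / 4) *: 1%:M + ((1 / 2) * (e1 * b1)) *: lambda1
  + ((1 / 2) * (e2 * b2)) *: lambda13 + ((1 / 2) * (e3 * b3)) *: lambda3.

End Defs.

(* Main.v *)
Require Import Defs.
From HB Require Import structures.
From mathcomp Require Import all_boot all_order all_algebra ring.
Import Order.TTheory GRing.Theory Num.Theory.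
Local Open Scope ring_scope.
Section S.
Variable C : numClosedFieldType.

Lemma psd2 (p q q' r x y : C) : p \is Num.real -> r \is Num.real -> q' = q^* ->
  0 < p + r -> 0 <= p * r - q * q' ->
  0 <= x^* * (p * x + q * y) + y^* * (q' * x + r * y).
Proof.
move=> Hp Hr Hq Hpr Hd.
set E := _ + _.
have key : (p + r) * E = (p * x + q * y) * (p * x + q * y)^*
   + (q' * x + r * y) * (q' * x + r * y)^* + (p * r - q * q') * (x * x^* + y * y^*).
  rewrite /E !rmorphD !rmorphM /= Hq conjCK (conj_Creal Hp) (conj_Creal Hr).
  ring.
have -> : E = ((p + r) * E) / (p + r) by rewrite [_ * E]mulrC mulfK // gt_eqF.
rewrite key; apply: divr_ge0; last exact: ltW.
apply: addr_ge0; [apply: addr_ge0|]; rewrite ?mul_conjC_ge0 //.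
apply: mulr_ge0 => //; apply: addr_ge0; exact: mul_conjC_ge0.
Qed.

Lemma adjmxD n (A B : 'M[C]_n) : adjmx (A + B) = adjmx A + adjmx B.
Proof. by apply/matrixP => i j; rewrite !mxE rmorphD. Qed.
Lemma adjmxZ n (c : C) (A : 'M[C]_n) : adjmx (c *: A) = c^* *: adjmx A.
Proof. by apply/matrixP => i j; rewrite !mxE rmorphM. Qed.
Lemma herm_lin n (c : C) (A B : 'M[C]_n) : c \is Num.real -> Defs.hermitian A -> Defs.hermitian B ->
  Defs.hermitian (A + c *: B).
Proof. by move=> Hc HA HB; rewrite /Defs.hermitian adjmxD adjmxZ HA HB (conj_Creal Hc). Qed.
Lemma herm1 n : Defs.hermitian (1%:M : 'M[C]_n).
Proof.
by apply/matrixP => i j; rewrite !mxE conjC_nat eq_sym.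
Qed.
Lemma herm_s1 : Defs.hermitian (sigma1 C).
Proof. apply/matrixP => -[[|[|//]] ?] [[|[|//]] ?]; by rewrite !mxE /= ?conjC0 ?conjC1. Qed.
Lemma herm_s2 : Defs.hermitian (sigma2 C).
Proof. apply/matrixP => -[[|[|//]] ?] [[|[|//]] ?]; by rewrite !mxE /= ?conjC0 ?raddfN /= ?conjCi ?opprK. Qed.
Lemma herm_s3 : Defs.hermitian (sigma3 C).
Proof. apply/matrixP => -[[|[|//]] ?] [[|[|//]] ?]; by rewrite !mxE /= ?conjC0 ?conjCN1 ?conjC1. Qed.

Lemma half_real : (1 / 2 : C) \is Num.real.
Proof. by apply: ger0_real; rewrite divr_ge0 ?ler0n. Qed.

Definition MA (a1 a2 a3 e1 e2 e3 : C) : 'M[C]_2 :=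
  (1 / 2) *: 1%:M + ((1 / 2) * (e1 * a1)) *: sigma1 C
  + ((1 / 2) * (e2 * a2)) *: sigma2 C + ((1 / 2) * (e3 * a3)) *: sigma3 C.

Lemma densA (a1 a2 a3 e1 e2 e3 : C) :
  a1 \is Num.real -> a2 \is Num.real -> a3 \is Num.real ->
  e1 \is Num.real -> e2 \is Num.real -> e3 \is Num.real ->
  e1 ^+ 2 = 1 -> e2 ^+ 2 = 1 -> e3 ^+ 2 = 1 ->
  a1 ^+ 2 + a2 ^+ 2 + a3 ^+ 2 <= 1 -> density (MA a1 a2 a3 e1 e2 e3).
Proof.
move=> Ra1 Ra2 Ra3 Re1 Re2 Re3 He1 He2 He3 Ha.
have Ru : (1/2 * (e1 * a1)) \is Num.real by apply: rpredM; [exact: half_real | exact: rpredM].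
have Rw : (1/2 * (e2 * a2)) \is Num.real by apply: rpredM; [exact: half_real | exact: rpredM].
have Rz : (1/2 * (e3 * a3)) \is Num.real by apply: rpredM; [exact: half_real | exact: rpredM].
have HM : Defs.hermitian (MA a1 a2 a3 e1 e2 e3).
  rewrite /MA -[X in X + _ *: _ + _ + _](add0r).
  apply: herm_lin => //; last exact: herm_s3.
  apply: herm_lin => //; last exact: herm_s2.
  apply: herm_lin => //; last exact: herm_s1.
  apply: herm_lin; rewrite ?half_real //; last exact: herm1.
  by apply/matrixP => i j; rewrite !mxE rmorph0.
split => //; last first.
  rewrite /mxtrace !big_ord_recr big_ord0 /= !mxE /=; by field.
move=> v.
rewrite /adjmx !mxE !big_ord_recr !big_ord0 /= !mxE !big_ord_recr !big_ord0 /= !mxE /=.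
set x := v _ ord0; set y := v ord_max ord0.
move: Ru Rw Rz; set u := 1/2 * (e1 * a1); set w := 1/2 * (e2 * a2); set z := 1/2 * (e3 * a3) => Ru Rw Rz.
have key := @psd2 (1/2 + z) (u - w * 'i) (u + w * 'i) (1/2 - z) x y.
apply: le_trans (key _ _ _ _ _) _.
- by rewrite rpredD ?half_real.
- by rewrite rpredB ?half_real.
- by rewrite raddfB /= (conj_Creal Ru) rmorphM /= conjCi (conj_Creal Rw) mulrN opprK.
- have -> : 1/2 + z + (1/2 - z) = 1 by field.
  exact: ltr01.
- have -> : (1 / 2 + z) * (1 / 2 - z) - (u - w * 'i) * (u + w * 'i)
     = 1/4 - z^+2 - u^+2 - w^+2 + w^+2 * ('i ^+ 2 + 1) :> C by field.
  have Eu : u ^+ 2 = 1/4 * a1 ^+ 2 :> C.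
    by rewrite /u !exprMn He1 mul1r; field.
  have Ew : w ^+ 2 = 1/4 * a2 ^+ 2 :> C.
    by rewrite /w !exprMn He2 mul1r; field.
  have Ez : z ^+ 2 = 1/4 * a3 ^+ 2 :> C.
    by rewrite /z !exprMn He3 mul1r; field.
  rewrite sqrCi addNr mulr0 addr0 Eu Ew Ez.
  have -> : 1/4 - 1/4 * a3 ^+ 2 - 1/4 * a1 ^+ 2 - 1/4 * a2 ^+ 2
     = 1/4 * (1 - (a1 ^+ 2 + a2 ^+ 2 + a3 ^+ 2)) :> C by field.
  by rewrite mulr_ge0 ?subr_ge0 ?divr_ge0 ?ler0n.
- rewrite le_eqVlt; apply/orP; left; apply/eqP; ring.
Qed.

Lemma herm_l1 : Defs.hermitian (lambda1 C).
Proof. apply/matrixP => -[[|[|[|[|//]]]] ?] [[|[|[|[|//]]]] ?]; by rewrite !mxE /= ?conjC0 ?conjC1. Qed.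
Lemma herm_l13 : Defs.hermitian (lambda13 C).
Proof. apply/matrixP => -[[|[|[|[|//]]]] ?] [[|[|[|[|//]]]] ?]; by rewrite !mxE /= ?conjC0 ?conjC1. Qed.
Lemma herm_l3 : Defs.hermitian (lambda3 C).
Proof. apply/matrixP => -[[|[|[|[|//]]]] ?] [[|[|[|[|//]]]] ?]; by rewrite !mxE /= ?conjC0 ?conjC1 ?conjCN1. Qed.

Definition MB (b1 b2 b3 e1 e2 e3 : C) : 'M[C]_4 :=
  (1 / 4) *: 1%:M + ((1 / 2) * (e1 * b1)) *: lambda1 C
  + ((1 / 2) * (e2 * b2)) *: lambda13 C + ((1 / 2) * (e3 * b3)) *: lambda3 C.

Lemma quarter_real : (1 / 4 : C) \is Num.real.
Proof. by apply: ger0_real; rewrite divr_ge0 ?ler0n. Qed.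

Lemma densB (b1 b2 b3 e1 e2 e3 : C) :
  b1 \is Num.real -> b2 \is Num.real -> b3 \is Num.real ->
  e1 \is Num.real -> e2 \is Num.real -> e3 \is Num.real ->
  e1 ^+ 2 = 1 -> e2 ^+ 2 = 1 -> e3 ^+ 2 = 1 ->
  b1 ^+ 2 + b3 ^+ 2 <= 1 / 4 -> b2 ^+ 2 <= 1 / 4 -> density (MB b1 b2 b3 e1 e2 e3).
Proof.
move=> Ra1 Ra2 Ra3 Re1 Re2 Re3 He1 He2 He3 Hb13 Hb2.
have Ru : (1/2 * (e1 * b1)) \is Num.real by apply: rpredM; [exact: half_real | exact: rpredM].
have Rw : (1/2 * (e2 * b2)) \is Num.real by apply: rpredM; [exact: half_real | exact: rpredM].
have Rz : (1/2 * (e3 * b3)) \is Num.real by apply: rpredM; [exact: half_real | exact: rpredM].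
have HM : Defs.hermitian (MB b1 b2 b3 e1 e2 e3).
  rewrite /MB -[X in X + _ *: _ + _ + _](add0r).
  apply: herm_lin => //; last exact: herm_l3.
  apply: herm_lin => //; last exact: herm_l13.
  apply: herm_lin => //; last exact: herm_l1.
  apply: herm_lin; rewrite ?quarter_real //; last exact: herm1.
  by apply/matrixP => i j; rewrite !mxE rmorph0.
split => //; last first.
  rewrite /mxtrace !big_ord_recr big_ord0 /= !mxE /=; by field.
move=> v.
rewrite /adjmx !mxE !big_ord_recr !big_ord0 /= !mxE !big_ord_recr !big_ord0 /= !mxE /=.
set x0 := v _ ord0. set x1 := v _ ord0. set x2 := v _ ord0. set x3 := v _ ord0.
have Eu : (1/2 * (e1 * b1)) ^+ 2 = 1/4 * b1 ^+ 2 :> C.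
  by rewrite !exprMn He1 mul1r; field.
have Ew : (1/2 * (e2 * b2)) ^+ 2 = 1/4 * b2 ^+ 2 :> C.
  by rewrite !exprMn He2 mul1r; field.
have Ez : (1/2 * (e3 * b3)) ^+ 2 = 1/4 * b3 ^+ 2 :> C.
  by rewrite !exprMn He3 mul1r; field.
move: Ru Rw Rz Eu Ew Ez; set u := 1/2 * (e1 * b1); set w := 1/2 * (e2 * b2); set z := 1/2 * (e3 * b3) => Ru Rw Rz Eu Ew Ez.
have k1 := @psd2 (1/4 + z) u u (1/4 - z) x0 x1.
have k2 := @psd2 (1/4) w w (1/4) x2 x3.
have q4 : (0 : C) < 1/4 + 1/4 by rewrite addr_gt0 // divr_gt0 ?ltr0n.
apply: le_trans (addr_ge0 (k1 _ _ _ _ _) (k2 _ _ _ _ _)) _.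
- by rewrite rpredD ?quarter_real.
- by rewrite rpredB ?quarter_real.
- by rewrite (conj_Creal Ru).
- by have -> : 1/4 + z + (1/4 - z) = 1/4 + 1/4 :> C by field.
- have -> : (1/4 + z) * (1/4 - z) - u * u = 1/16 - z^+2 - u^+2 :> C by field.
  rewrite Ez Eu.
  have -> : 1/16 - 1/4*b3^+2 - 1/4*b1^+2 = 1/4 * (1/4 - (b1^+2+b3^+2)) :> C by field.
  by rewrite mulr_ge0 ?subr_ge0 ?divr_ge0 ?ler0n.
- exact: quarter_real.
- exact: quarter_real.
- by rewrite (conj_Creal Rw).
- by [].
- have -> : 1/4 * (1/4) - w * w = 1/4 * (1/4 - b2 ^+ 2) :> C.
    by rewrite -[w * w]expr2 Ew; field.
  by rewrite mulr_ge0 ?subr_ge0 ?divr_ge0 ?ler0n.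
- rewrite le_eqVlt; apply/orP; left; apply/eqP; by field.
Qed.

Lemma decomp (t1 t2 t3 a1 a2 a3 : C) : a1 != 0 -> a2 != 0 -> a3 != 0 ->
  rhoAB t1 t2 t3 = \sum_(i < 4) (1 / 4) *: kron (rhoA a1 a2 a3 i) (rhoB (t1/a1) (t2/a2) (t3/a3) i).
Proof.
move=> H1 H2 H3.
apply/matrixP => i j; rewrite summxE !big_ord_recr big_ord0 /= !mxE.
case: i => [[|[|[|[|[|[|[|[|//]]]]]]]] Hi]; case: j => [[|[|[|[|[|[|[|[|//]]]]]]]] Hj];
 by rewrite /= ?mxE /=; field; rewrite ?H1 ?H2 ?H3.
Qed.
End S.

Lemma eps_props (C : numClosedFieldType) (i : 'I_4) (e1 e2 e3 : C) :
  eps C i = (e1, e2, e3) ->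
  [/\ e1 \is Num.real, e2 \is Num.real & e3 \is Num.real] /\
  [/\ e1 ^+ 2 = 1, e2 ^+ 2 = 1 & e3 ^+ 2 = 1].
Proof.
case: i => [[|[|[|[|//]]]] ?]; rewrite /eps /= => -[<- <- <-]; split; split;
  by rewrite ?rpredN ?rpred1 ?sqrrN ?expr1n.
Qed.

Theorem mainTheorem4 (C : numClosedFieldType) (t1 t2 t3 a1 a2 a3 : C) :
  t1 \is Num.real -> t2 \is Num.real -> t3 \is Num.real ->
  a1 \is Num.real -> a2 \is Num.real -> a3 \is Num.real ->
  a1 != 0 -> a2 != 0 -> a3 != 0 ->
  a1 ^+ 2 + a2 ^+ 2 + a3 ^+ 2 <= 1 ->
  t1 ^+ 2 / a1 ^+ 2 + t3 ^+ 2 / a3 ^+ 2 <= 1 / 4 ->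
  t2 ^+ 2 / a2 ^+ 2 <= 1 / 4 ->
  separable (rhoAB t1 t2 t3)
  /\ (let b1 := t1 / a1 in let b2 := t2 / a2 in let b3 := t3 / a3 in
      rhoAB t1 t2 t3 = \sum_(i < 4) (1 / 4) *: kron (rhoA a1 a2 a3 i) (rhoB b1 b2 b3 i)
      /\ forall i : 'I_4, density (rhoA a1 a2 a3 i) /\ density (rhoB b1 b2 b3 i)).
Proof.
move=> Rt1 Rt2 Rt3 Ra1 Ra2 Ra3 H1 H2 H3 Ha Hb13 Hb2.
have Rb1 : t1 / a1 \is Num.real by apply: rpredM => //; rewrite rpredV.
have Rb2 : t2 / a2 \is Num.real by apply: rpredM => //; rewrite rpredV.
have Rb3 : t3 / a3 \is Num.real by apply: rpredM => //; rewrite rpredV.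
have Hb13' : (t1 / a1) ^+ 2 + (t3 / a3) ^+ 2 <= 1 / 4 by rewrite !expr_div_n.
have Hb2' : (t2 / a2) ^+ 2 <= 1 / 4 by rewrite !expr_div_n.
have HD : forall i : 'I_4, density (rhoA a1 a2 a3 i) /\ density (rhoB (t1/a1) (t2/a2) (t3/a3) i).
  move=> i.
  case E: (eps C i) => [[e1 e2] e3].
  have -> : rhoA a1 a2 a3 i = @MA C a1 a2 a3 e1 e2 e3 by rewrite /rhoA E.
  have -> : rhoB (t1/a1) (t2/a2) (t3/a3) i = @MB C (t1/a1) (t2/a2) (t3/a3) e1 e2 e3.
    by rewrite /rhoB E.
  have [[R1 R2 R3] [S1 S2 S3]] := @eps_props C i e1 e2 e3 E.
  by split; [apply: densA | apply: densB].
have Hd := @decomp C t1 t2 t3 a1 a2 a3 H1 H2 H3.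
split; last by [].
exists 4, (fun=> 1/4), (rhoA a1 a2 a3), (rhoB (t1/a1) (t2/a2) (t3/a3)); split => //.
- by move=> _; rewrite divr_ge0 ?ler0n.
- rewrite sumr_const card_ord -mulr_natr; by field.
Qed.
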